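(* Let $G$ be a finite group, $\alpha \in \mathbb{Z}_{\geq 0}$, and let $K(G,\alpha)$ be the near-group fusion ring. All irreducible NIM-reps $(A,M)$ over $K(G,\alpha)$ whose basis $M$ consists of exactly two $G$-orbits, $M=\{m^1_k\}_{1\leq k\leq |G:H_1|}\cup\{m^2_k\}_{1\leq k\leq |G:H_2|}$ with the orbits governed by subgroups $H_1,H_2\subseteq G$, are parametrised by tuples $(H_1,H_2,c_{1,1},c_{2,2})$, where $H_1,H_2\subseteq G$ are subgroups and $c_{1,1},c_{2,2}\in \mathbb{Z}_{\geq0}$, satisfying the conditions \begin{itemize} \item $\alpha = c_{1,1}|G:H_1| + c_{2,2}|G:H_2|$, \item $|G|$ divides $|H_1||H_2|$, and \item $\frac{|H_1||H_2|}{|G|}+ c_{1,1}c_{2,2}$ is a square number. \end{itemize} For such a tuple, the action of the non-invertible element $X$ is given by \begin{align*} X \vartriangleright m^1_i &= c_{1,1}\sum_{k=1}^{|G:H_1|}m^1_k + \sqrt{\tfrac{|H_1||H_2|}{|G|} + c_{1,1}c_{2,2}}\sum_{k=1}^{|G:H_2|}m^2_k,\\ X \vartriangleright m^2_i &= \sqrt{\tfrac{|H_1||H_2|}{|G|} + c_{1,1}c_{2,2}}\sum_{k=1}^{|G:H_1|}m^1_k + c_{2,2}\sum_{k=1}^{|G:H_2|}m^2_k, \end{align*} i.e. $c_{1,2}=c_{2,1}=\sqrt{\frac{|H_1||H_2|}{|G|} + c_{1,1}c_{2,2}}$.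
   Context: The near-group fusion ring $K(G,\alpha)$ is the integer span of $G\cup\{X\}$, with group elements multiplying by the group operation, $Xg=gX=X$ for $g\in G$, $X^2=\sum_{g\in G} g+\alpha X$, and $X^*=X$. A NIM-rep is a $\mathbb{Z}_+$-module $(A,M)$ over the fusion ring with symmetric bilinear form $(m_l,m_k)=\delta_{l,k}$ satisfying $(b\vartriangleright m_l,m_k)=(m_l,b^*\vartriangleright m_k)$. The group elements act on the basis $M$ by a $G$-action, partitioning $M$ into $G$-orbits, each isomorphic to a left coset set $G/H_i$ for a subgroup $H_i$. For orbit labels $i,j$, $c_{i,j}:=(X\vartriangleright m^i_l,m^j_k)$, which is independent of $l,k$ and symmetric in $i,j$, so that $X\vartriangleright m^i_l=\sum_j c_{i,j}\sum_k m^j_k$. *)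

(* Defs.v *)
From mathcomp Require Import all_boot all_fingroup.
Set Implicit Arguments. Unset Strict Implicit. Unset Printing Implicit Defensive.
Local Open Scope group_scope.

(* The near-group fusion ring K(G,alpha), G = the whole finite group gT.
   Basis: option gT, with [Some g] the group element g and [None] = X. *)

(* Structure constants N_{a,b}^c of K(G,alpha): a * b = sum_c N a b c * c. *)
Definition ng_N (gT : finGroupType) (alpha : nat) (a b c : option gT) : nat :=
  match a, b with
  | Some g, Some h => nat_of_bool (c == Some (g * h))
  | Some _, None | None, Some _ => nat_of_bool (c == None)
  | None, None => if c is Some _ then 1%N else alpha
  end.

Definition ng_dual (gT : finGroupType) (a : option gT) : option gT :=
  match a with Some g => Some g^-1 | None => None end.

(* A Z_+-module over K(G,alpha) with basis T (orthonormal for the form):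
   rho b k l = (b |> m_k, m_l), i.e. b |> m_k = sum_l rho b k l * m_l. *)
Record isNIMrep (gT : finGroupType) (alpha : nat) (T : finType)
    (rho : option gT -> T -> T -> nat) : Prop := {
  nim_unit : forall k l, rho (Some 1) k l = nat_of_bool (k == l);
  (* (a b) |> m_k = a |> (b |> m_k) *)
  nim_mul : forall a b k l,
    (\sum_(c : option gT) ng_N alpha a b c * rho c k l)%N
    = (\sum_(j : T) rho b k j * rho a j l)%N;
  nim_adj : forall b k l, rho b k l = rho (ng_dual b) l k
}.

Definition NIM_irreducible (gT : finGroupType) (T : finType)
    (rho : option gT -> T -> T -> nat) : Prop :=
  (0 < #|T|)%N /\
  forall S : {set T},
    (forall b k l, k \in S -> rho b k l != 0%N -> l \in S) ->
    S = set0 \/ S = setT.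

Definition G_orb (gT : finGroupType) (T : finType)
    (rho : option gT -> T -> T -> nat) (k l : T) : bool :=
  [exists g : gT, rho (Some g) k l != 0%N].

Definition G_stab (gT : finGroupType) (T : finType)
    (rho : option gT -> T -> T -> nat) (k : T) : {set gT} :=
  [set g : gT | rho (Some g) k k != 0%N].

Definition two_orbits (gT : finGroupType) (T : finType)
    (rho : option gT -> T -> T -> nat) (m1 m2 : T) : Prop :=
  ~~ G_orb rho m1 m2 /\ forall k, G_orb rho m1 k || G_orb rho m2 k.

Definition X_action_is (gT : finGroupType) (T : finType)
    (rho : option gT -> T -> T -> nat) (m1 : T) (c11 c12 c22 : nat) : Prop :=
  forall k l, rho None k l =
    if G_orb rho m1 k then (if G_orb rho m1 l then c11 else c12)
    else (if G_orb rho m1 l then c12 else c22).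

(* Main.v *)
Require Import Defs.
From mathcomp Require Import all_boot all_fingroup.
From mathcomp Require Import zify ring.
Set Implicit Arguments. Unset Strict Implicit. Unset Printing Implicit Defensive.

Lemma sum_option (T : finType) (F : option T -> nat) :
  (\sum_(c : option T) F c = F None + \sum_(g : T) F (Some g))%N.
Proof.
rewrite (bigD1 None) //=; congr (_ + _).
rewrite (reindex_omap Some id) /=; last by case.
by apply: eq_bigl => g; rewrite eqxx.
Qed.

Lemma sum_pick (T : finType) (x : T) (F : T -> nat) :
  (\sum_(j : T) (x == j) * F j = F x)%N.
Proof.
rewrite (bigD1 x) //= eqxx mul1n big1 ?addn0 // => j /negbTE.
by rewrite eq_sym => ->.
Qed.

Section Fwd.
Variables (gT : finGroupType) (alpha : nat) (T : finType)
  (rho : option gT -> T -> T -> nat).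
Hypothesis NR : isNIMrep alpha rho.

Local Notation P g := (rho (Some g)).
Local Notation X := (rho None).

Lemma NSS g h k l :
  (\sum_c ng_N alpha (Some g) (Some h) c * rho c k l = P (g * h)%g k l)%N.
Proof.
rewrite sum_option /= mul0n add0n.
under eq_bigr => x _ do rewrite eq_sym.
by rewrite (sum_pick (g * h)%g (fun x => P x k l)).
Qed.

Lemma Pmul g h k l : P (g * h)%g k l = (\sum_j P h k j * P g j l)%N.
Proof. by rewrite -NSS (nim_mul NR). Qed.

Lemma Padj g k l : P g k l = P (g^-1)%g l k.
Proof. by rewrite (nim_adj NR). Qed.

Lemma Xsym k l : X k l = X l k.
Proof. by rewrite (nim_adj NR). Qed.

Lemma Psq g k : (\sum_j P g k j * P g k j = 1)%N.
Proof.
have := Pmul (g^-1)%g g k k; rewrite mulVg (nim_unit NR) eqxx /= => E.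
rewrite E.
by apply: eq_bigr => j _; rewrite [P (g^-1)%g j k]Padj invgK.
Qed.

Lemma Ple1 g k l : P g k l <= 1.
Proof.
have := Psq g k; rewrite (bigD1 l) //= => E.
have : P g k l * P g k l <= 1 by rewrite -E leq_addr.
by case: (P g k l) => [|[|n]].
Qed.

Lemma Psum g k : (\sum_l P g k l = 1)%N.
Proof.
rewrite -(Psq g k); apply: eq_bigr => l _.
by have := Ple1 g k l; case: (P g k l) => [|[|]].
Qed.

Lemma Pbool g k l : P g k l = (P g k l != 0%N).
Proof. by have := Ple1 g k l; case: (P g k l) => [|[|]]. Qed.

Lemma P1 k : P 1%g k k = 1.
Proof. by rewrite (nim_unit NR) eqxx. Qed.

Lemma orb_refl k : G_orb rho k k.
Proof. by apply/existsP; exists 1%g; rewrite P1. Qed.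

Lemma orb_sym k l : G_orb rho k l -> G_orb rho l k.
Proof.
by move/existsP=> [g Hg]; apply/existsP; exists (g^-1)%g; rewrite -Padj.
Qed.

Lemma orb_trans k j l : G_orb rho k j -> G_orb rho j l -> G_orb rho k l.
Proof.
move/existsP=> [g Hg] /existsP [h Hh]; apply/existsP; exists (h * g)%g.
rewrite Pmul (bigD1 j) //= -lt0n; apply: leq_trans (leq_addr _ _).
by rewrite muln_gt0 !lt0n Hg Hh.
Qed.

Lemma Xrow k j l : G_orb rho k j -> X k l = X j l.
Proof.
have key : forall k j, G_orb rho k j -> X j l <= X k l.
  move=> k' j' /existsP [h Hh].
  have := nim_mul NR None (Some h) k' l.
  rewrite sum_option /= mul1n big1 ?addn0 // => ->.
  rewrite (bigD1 j') //=; apply: leq_trans (leq_addr _ _).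
  by rewrite Pbool Hh mul1n.
move=> H; apply/eqP; rewrite eqn_leq key /= ?key //.
exact: orb_sym.
Qed.

Lemma Xcol k j l : G_orb rho l j -> X k l = X k j.
Proof. by move=> H; rewrite Xsym (Xrow _ H) Xsym. Qed.

Definition F m l := (\sum_g P g m l)%N.

Lemma Xsq k l : (F k l + alpha * X k l = \sum_j X k j * X j l)%N.
Proof.
have := nim_mul NR None None k l.
rewrite sum_option /= => <-; rewrite addnC /F; congr (_ + _).
by apply: eq_bigr => g _; rewrite mul1n.
Qed.

Lemma F_orb m l : G_orb rho m l -> F m l = F m m.
Proof.
move=> H.
have E1 := Xsq m l; have E2 := Xsq m m.
have : (\sum_j X m j * X j l = \sum_j X m j * X j m)%N.
  by apply: eq_bigr => j _; rewrite (Xcol j H).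
rewrite -E1 -E2 (Xcol m H) => /eqP; rewrite eqn_add2r => /eqP //.
Qed.

Lemma F_stab m : F m m = #|G_stab rho m|.
Proof.
rewrite /F /G_stab -sum1_card [RHS]big_mkcond /=.
by apply: eq_bigr => g _; rewrite inE Pbool; case: (_ != _).
Qed.

Lemma orbit_stab m :
  (#|[set l | G_orb rho m l]| * #|G_stab rho m| = #|gT|)%N.
Proof.
rewrite -F_stab -sum_nat_const -[#|gT|]sum1_card.
transitivity (\sum_(g : gT) \sum_l P g m l)%N; last first.
  by apply: eq_bigr => g _; rewrite Psum.
rewrite [RHS]exchange_big /= [RHS](bigID (fun l => l \in [set l | G_orb rho m l])) /=.
rewrite [X in (_ + X)%N]big1 ?addn0; last first.
  move=> l; rewrite inE => Hl; apply: big1 => g _.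
  apply/eqP; apply: contraNT Hl => Hg; apply/existsP; by exists g.
by apply: eq_bigr => l; rewrite inE => Hl; rewrite -(F_orb Hl).
Qed.

Lemma stab_group m : group_set (G_stab rho m).
Proof.
apply/group_setP; split; first by rewrite inE P1.
move=> x y; rewrite !inE => Hx Hy.
rewrite Pmul (bigD1 m) //= -lt0n; apply: leq_trans (leq_addr _ _).
by rewrite muln_gt0 !lt0n Hx Hy.
Qed.

End Fwd.

Lemma sum_split (T : finType) (p : pred T) (a b : nat) (F : T -> nat) :
  (forall j, F j = if p j then a else b) ->
  (\sum_j F j = #|[set j | p j]| * a + #|[set j | ~~ p j]| * b)%N.
Proof.
move=> HF; rewrite (bigID p) /= -!sum_nat_const; congr (_ + _).
  by apply: eq_big => [j|j Hj]; rewrite ?inE // HF Hj.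
by apply: eq_big => [j|j Hj]; rewrite ?inE // HF (negbTE Hj).
Qed.

Lemma forward (gT : finGroupType) (alpha : nat) :
  (forall (T : finType) (rho : option gT -> T -> T -> nat) (m1 m2 : T),
     isNIMrep alpha rho -> NIM_irreducible rho -> two_orbits rho m1 m2 ->
     exists c11 c22 s : nat,
       [/\ alpha = (c11 * (#|[set: gT] : G_stab rho m1|)%g
                    + c22 * (#|[set: gT] : G_stab rho m2|)%g)%N,
           (#|gT| %| #|G_stab rho m1| * #|G_stab rho m2|)%N,
           (s ^ 2 = #|G_stab rho m1| * #|G_stab rho m2| %/ #|gT| + c11 * c22)%N
         & X_action_is rho m1 c11 s c22]).
Proof.
move=> T rho m1 m2 NR [pos irr] [n12 cov].
set c11 := rho None m1 m1; set s := rho None m1 m2; set c22 := rho None m2 m2.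
have blk : forall k l, rho None k l =
    if G_orb rho m1 k then (if G_orb rho m1 l then c11 else s)
    else (if G_orb rho m1 l then s else c22).
  move=> k l.
  have rowE : rho None k l = rho None (if G_orb rho m1 k then m1 else m2) l.
    case hk: (G_orb rho m1 k); first by rewrite (Xrow NR l (orb_sym NR hk)).
    have hk2 : G_orb rho m2 k by move: (cov k); rewrite hk.
    by rewrite (Xrow NR l (orb_sym NR hk2)).
  have colE : forall k', rho None k' l = rho None k' (if G_orb rho m1 l then m1 else m2).
    move=> k'; case hl: (G_orb rho m1 l); first by rewrite (Xcol NR k' (orb_sym NR hl)).
    have hl2 : G_orb rho m2 l by move: (cov l); rewrite hl.
    by rewrite (Xcol NR k' (orb_sym NR hl2)).
  rewrite rowE colE.
  by case: (G_orb rho m1 k); case: (G_orb rho m1 l); rewrite // /s (Xsym NR).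
have m1in : G_orb rho m1 m1 := orb_refl NR m1.
have m2out : G_orb rho m1 m2 = false by apply/negbTE.
have s_gt0 : 0 < s.
  rewrite lt0n; apply/negP => /eqP s0.
  have := irr [set l | G_orb rho m1 l].
  case.
  - move=> [g|] k l; rewrite !inE => hk hl.
      by apply: (orb_trans NR hk); apply/existsP; exists g.
    case hl': (G_orb rho m1 l) => //; move: hl.
    by rewrite blk hk hl' s0 eqxx.
  - by move/setP/(_ m1); rewrite !inE m1in.
  - by move/setP/(_ m2); rewrite !inE m2out.
pose n1 := #|[set j | G_orb rho m1 j]|.
pose n2 := #|[set j | ~~ G_orb rho m1 j]|.
have n2E : n2 = #|[set j | G_orb rho m2 j]|.
  apply: eq_card => j; rewrite !inE; apply/idP/idP => [h|h].
    by move: (cov j); rewrite (negbTE h).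
  apply/negP => h1; move: n12; rewrite (orb_trans NR h1 (orb_sym NR h)) //.
have os1 := orbit_stab NR m1; have os2 := orbit_stab NR m2.
rewrite -/n1 -n2E in os1 os2.
have h1pos : 0 < #|G_stab rho m1|
  by apply/card_gt0P; exists 1%g; rewrite inE (P1 NR).
have h2pos : 0 < #|G_stab rho m2|
  by apply/card_gt0P; exists 1%g; rewrite inE (P1 NR).
have idx1 : #|[set: gT] : G_stab rho m1|%g = n1.
  have := Lagrange (subsetT (Group (stab_group NR m1))).
  by rewrite cardsT /= -os1 mulnC => /eqP; rewrite eqn_pmul2r // => /eqP.
have idx2 : #|[set: gT] : G_stab rho m2|%g = n2.
  have := Lagrange (subsetT (Group (stab_group NR m2))).
  by rewrite cardsT /= -os2 mulnC => /eqP; rewrite eqn_pmul2r // => /eqP.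
have E11 := Xsq NR m1 m1; have E12 := Xsq NR m1 m2.
rewrite (F_stab NR) in E11.
have F12 : F rho m1 m2 = 0.
  apply: big1 => g _; apply/eqP; apply: contraFT m2out => h.
  by apply/existsP; exists g.
rewrite F12 add0n in E12.
rewrite (@sum_split _ (G_orb rho m1) (c11 * c11) (s * s)) -/n1 -/n2 in E11;
  last by move=> j; rewrite !blk m1in; case: (G_orb rho m1 j); rewrite // mulnC.
rewrite (@sum_split _ (G_orb rho m1) (c11 * s) (s * c22)) -/n1 -/n2 in E12;
  last by move=> j; rewrite !blk m1in m2out; case: (G_orb rho m1 j); rewrite // mulnC.
have alphaE : alpha = (c11 * n1 + c22 * n2)%N.
  apply/eqP; rewrite -(eqn_pmul2r s_gt0) E12; apply/eqP; nia.
have n2pos : 0 < n2 by apply/card_gt0P; exists m2; rewrite inE m2out.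
have key : (#|G_stab rho m1| + n2 * (c11 * c22) = n2 * (s * s))%N.
  by rewrite alphaE in E11; nia.
have le : c11 * c22 <= s * s by rewrite -(leq_pmul2l n2pos) -key leq_addl.
pose q := (s * s - c11 * c22)%N.
have h1E : #|G_stab rho m1| = (q * n2)%N by rewrite /q mulnBl; nia.
have prodE : (#|G_stab rho m1| * #|G_stab rho m2| = q * #|gT|)%N.
  by rewrite h1E -mulnA os2.
have Npos : 0 < #|gT| by rewrite -os1 muln_gt0 h1pos andbT; apply/card_gt0P; exists m1; rewrite inE.
exists c11, c22, s; split.
- by rewrite idx1 idx2.
- by rewrite prodE dvdn_mull.
- by rewrite prodE mulnK // /q subnK // mulnn.
- by move=> k l; exact: blk.
Qed.
Lemma sumT_const (I : finType) (c : nat) : (\sum_(i : I) c = #|I| * c)%N.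
Proof. by rewrite sum_nat_const. Qed.

Section Bwd.
Variables (gT : finGroupType) (H1 H2 : {group gT}) (c11 c22 s : nat).

Definition C (H : {group gT}) := {A : {set gT} | A \in lcosets H [set: gT]}.

Lemma lcosets_mul (H : {group gT}) g A :
  A \in lcosets H [set: gT] -> (g *: A)%g \in lcosets H [set: gT].
Proof.
case/lcosetsP => x _ ->; rewrite -lcosetM; apply/lcosetsP.
by exists (g * x)%g; rewrite ?inE.
Qed.

Definition actC H g (A : C H) : C H :=
  exist _ (g *: val A)%g (lcosets_mul g (valP A)).

Lemma actC1 H (A : C H) : actC 1%g A = A.
Proof. by apply: val_inj; rewrite /= lcoset1. Qed.

Lemma actCM H g h (A : C H) : actC (g * h)%g A = actC g (actC h A).
Proof. by apply: val_inj; rewrite /= lcosetM. Qed.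

Lemma card_C H : #|{: C H}| = #|[set: gT] : H|%g.
Proof. by rewrite card_sig -card_lcosets; apply: eq_card => A; rewrite inE. Qed.

Lemma count_C H (A B : C H) :
  (\sum_(g : gT) (actC g A == B) = #|H|)%N.
Proof.
case: A B => [A HA] [B HB].
have [x _ Ax] := lcosetsP HA; have [y _ By] := lcosetsP HB.
transitivity (\sum_(g in ((y *: H) :* x^-1)%g) 1)%N; last first.
  by rewrite sum1_card card_rcoset card_lcoset.
rewrite [RHS]big_mkcond; apply: eq_bigr => g _.
rewrite -val_eqE /= Ax By -lcosetM mem_rcoset invgK.
by case: (lcoset_eqP) => [->|]; rewrite ?eqxx //; case: eqP.
Qed.

Definition TT := (C H1 + C H2)%type.

Definition act g (k : TT) : TT :=
  match k with inl A => inl (actC g A) | inr B => inr (actC g B) end.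

Definition side (k : TT) := if k is inl _ then true else false.

Definition rr (b : option gT) (k l : TT) : nat :=
  match b with
  | Some g => act g k == l
  | None => if side k then (if side l then c11 else s)
            else (if side l then s else c22)
  end.

Lemma act1 k : act 1%g k = k.
Proof. by case: k => A /=; rewrite actC1. Qed.

Lemma actM g h k : act (g * h)%g k = act g (act h k).
Proof. by case: k => A /=; rewrite actCM. Qed.

Lemma act_side g k : side (act g k) = side k.
Proof. by case: k. Qed.

Lemma actK g k : act (g^-1)%g (act g k) = k.
Proof. by rewrite -actM mulVg act1. Qed.

Lemma actKV g k : act g (act (g^-1)%g k) = k.
Proof. by rewrite -actM mulgV act1. Qed.

Lemma act_eq g j l : (act g j == l) = (j == act (g^-1)%g l).
Proof.
by apply/eqP/eqP => [<-|->]; rewrite ?actK ?actKV.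
Qed.

Lemma H1in : (H1 : {set gT}) \in lcosets H1 [set: gT].
Proof. by apply/lcosetsP; exists 1%g; rewrite ?inE ?lcoset1. Qed.
Lemma H2in : (H2 : {set gT}) \in lcosets H2 [set: gT].
Proof. by apply/lcosetsP; exists 1%g; rewrite ?inE ?lcoset1. Qed.

Definition m1 : TT := inl (exist (fun A => A \in lcosets H1 [set: gT]) (H1 : {set gT}) H1in).
Definition m2 : TT := inr (exist (fun A => A \in lcosets H2 [set: gT]) (H2 : {set gT}) H2in).

Lemma reach k : exists x, act x (if side k then m1 else m2) = k.
Proof.
case: k => [[A HA]|[A HA]]; have [x _ Ax] := lcosetsP HA; exists x => /=;
  congr (_ _); apply: val_inj; by rewrite /= Ax.
Qed.

Lemma trans_act k l : side k = side l -> exists g, act g k = l.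
Proof.
move=> e; have [x hx] := reach k; have [y hy] := reach l.
exists (y * x^-1)%g; rewrite actM -hx actK -hy e //.
Qed.


Lemma count_T k l : (\sum_g rr (Some g) k l =
  if side k then (if side l then #|H1| else 0) else (if side l then 0 else #|H2|))%N.
Proof.
case: k l => A [] B /=; rewrite ?count_C //; by rewrite big1.
Qed.

Lemma rrN_act g k l : rr None (act g k) l = rr None k l /\ rr None k (act g l) = rr None k l.
Proof. by rewrite /rr !act_side. Qed.

Variable alpha : nat.
Hypothesis Halpha : alpha = (c11 * (#|[set: gT] : H1|)%g + c22 * (#|[set: gT] : H2|)%g)%N.
Hypothesis Hdvd : (#|gT| %| #|H1| * #|H2|)%N.
Hypothesis Hs : (s ^ 2 = #|H1| * #|H2| %/ #|gT| + c11 * c22)%N.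

Lemma rr_nim : isNIMrep alpha rr.
Proof.
split.
- by move=> k l; rewrite /= act1.
- move=> [g|] [h|] k l; rewrite sum_option /=.
  + rewrite mul0n add0n; under eq_bigr => x _ do rewrite eq_sym.
    rewrite (sum_pick (g * h)%g (fun x => rr (Some x) k l)) /= actM.
    by rewrite (sum_pick (act h k) (fun j => act g j == l)).
  + rewrite mul1n big1 ?addn0 //.
    under eq_bigr => j _ do rewrite act_eq eq_sym mulnC.
    by rewrite (sum_pick (act (g^-1)%g l) (fun j => rr None k j)) (rrN_act _ _ _).2.
  + rewrite mul1n big1 ?addn0 //.
    by rewrite (sum_pick (act h k) (fun j => rr None j l)) (rrN_act _ _ _).1.
  + under eq_bigr => g _ do rewrite mul1n.
    rewrite count_T big_sumType /= !sumT_const !card_C.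
    set n1 := #|[set: gT] : H1|%g; set n2 := #|[set: gT] : H2|%g.
    have L1 : (#|H1| * n1 = #|gT|)%N by rewrite Lagrange ?subsetT // cardsT.
    have L2 : (#|H2| * n2 = #|gT|)%N by rewrite Lagrange ?subsetT // cardsT.
    set q := (#|H1| * #|H2| %/ #|gT|)%N.
    have qE : (#|H1| * #|H2| = q * #|gT|)%N by rewrite divnK.
    have h1E : #|H1| = (q * n2)%N.
      apply/eqP; rewrite -(eqn_pmul2r (cardG_gt0 H2)) qE -L2; apply/eqP; ring.
    have h2E : #|H2| = (q * n1)%N.
      apply/eqP; rewrite -(eqn_pmul2l (cardG_gt0 H1)) qE -L1; apply/eqP; ring.
    have ss : (s * s = q + c11 * c22)%N by rewrite mulnn Hs.
    rewrite Halpha -/n1 -/n2.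
    case: k => A; case: l => B /=; rewrite ?ss ?h1E ?h2E; nia.
- move=> [g|] k l /=; first by rewrite act_eq eq_sym.
  by case: (side k); case: (side l).
Qed.


Lemma s_gt0 : 0 < s.
Proof.
have qE : (#|H1| * #|H2| = (#|H1| * #|H2| %/ #|gT|) * #|gT|)%N by rewrite divnK.
have : 0 < (#|H1| * #|H2| %/ #|gT|)%N.
  have p1 := cardG_gt0 H1; have p2 := cardG_gt0 H2; nia.
move=> qpos; have : 0 < s ^ 2 by rewrite Hs ltn_addr.
by rewrite expn_gt0 orbF.
Qed.

Lemma rr_irr : NIM_irreducible rr.
Proof.
split; first by apply/card_gt0P; exists m1.
move=> S cl; case: (set_0Vmem S) => [->|[k kS]]; [by left|right].
apply/setP => l; rewrite inE.
case e: (side k == side l).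
  have [g hg] := trans_act (eqP e).
  by apply: (cl (Some g) k l kS); rewrite /= hg eqxx.
apply: (cl None k l kS); rewrite /=.
move: e; case: (side k); case: (side l) => //= _; by rewrite -lt0n s_gt0.
Qed.

Lemma orb_side k : G_orb rr m1 k = side k.
Proof.
apply/existsP/idP => [[g]|sk].
  by rewrite /= eqb0 negbK => /eqP <-.
have [x hx] := reach k; exists x; move: hx; rewrite sk => hx; by rewrite /rr hx eqxx.
Qed.

Lemma rr_two : two_orbits rr m1 m2.
Proof.
split; first by rewrite orb_side.
move=> k; have [g hg] := reach k.
case sk: (side k); first by rewrite orb_side sk.
apply/orP; right; apply/existsP; exists g; by rewrite /= eqb0 negbK -hg sk.
Qed.

Lemma stab_act (H : {group gT}) g : ((g *: H)%g == H) = (g \in H).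
Proof.
apply/eqP/idP => [<-|gH]; first exact: lcoset_refl.
exact: lcoset_id.
Qed.

Lemma rr_stab : G_stab rr m1 = H1 /\ G_stab rr m2 = H2.
Proof.
split; apply/setP => g; rewrite inE /= eqb0 negbK ?(inj_eq inl_inj) ?(inj_eq inr_inj) -val_eqE /=;
  exact: stab_act.
Qed.

Lemma rr_X : X_action_is rr m1 c11 s c22.
Proof. by move=> k l; rewrite !orb_side. Qed.

End Bwd.

Theorem proposition3p15 (gT : finGroupType) (alpha : nat) :
  (* every irreducible NIM-rep with two G-orbits yields such a tuple *)
  (forall (T : finType) (rho : option gT -> T -> T -> nat) (m1 m2 : T),
     isNIMrep alpha rho -> NIM_irreducible rho -> two_orbits rho m1 m2 ->
     exists c11 c22 s : nat,
       [/\ alpha = (c11 * (#|[set: gT] : G_stab rho m1|)%g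
                    + c22 * (#|[set: gT] : G_stab rho m2|)%g)%N,
           (#|gT| %| #|G_stab rho m1| * #|G_stab rho m2|)%N,
           (s ^ 2 = #|G_stab rho m1| * #|G_stab rho m2| %/ #|gT| + c11 * c22)%N
         & X_action_is rho m1 c11 s c22])
  /\
  (* every such tuple is realised by an irreducible NIM-rep with two G-orbits *)
  (forall (H1 H2 : {group gT}) (c11 c22 s : nat),
     alpha = (c11 * (#|[set: gT] : H1|)%g + c22 * (#|[set: gT] : H2|)%g)%N ->
     (#|gT| %| #|H1| * #|H2|)%N ->
     (s ^ 2 = #|H1| * #|H2| %/ #|gT| + c11 * c22)%N ->
     exists (T : finType) (rho : option gT -> T -> T -> nat) (m1 m2 : T),
       [/\ isNIMrep alpha rho, NIM_irreducible rho, two_orbits rho m1 m2,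
           G_stab rho m1 = H1 /\ G_stab rho m2 = H2
         & X_action_is rho m1 c11 s c22]).
Proof.
split; first exact: forward.
move=> H1 H2 c11 c22 s Ha Hd Hs.
exists (TT H1 H2), (@rr gT H1 H2 c11 c22 s), (m1 H1 H2), (m2 H1 H2); split.
- exact: (rr_nim Ha Hd Hs).
- exact: (rr_irr Ha Hd Hs).
- exact: rr_two.
- exact: rr_stab.
- exact: rr_X.
Qed.
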